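(* Let a product two-action game with $m$ players be given and let $\pi\in S_m$ have exactly one fixed point. Then $EC(\pi)$ has exactly two elements, and exactly one of them is a Nash equilibrium.
   Context: Fix an integer $m\ge 1$ and $\mathcal A=\{1,\dots,m\}$. A two-action game is a finite game in normal form with player set $\mathcal A$ in which each player $i$ has exactly two pure strategies $s^i_0,s^i_1$, together with utility functions $U^i:S\to\mathbb R$, where $S=\prod_{i\in\mathcal A}\{s^i_0,s^i_1\}$. A mixed strategy combination is identified with $\underline\gamma=(\gamma^1,\dots,\gamma^m)\in[0,1]^m$, where $\gamma^i$ is the probability with which player $i$ plays $s^i_1$. The expected utility $V^i$ is the multilinear extension $V^i(\underline\gamma)=\sum_{(j_1,\dots,j_m)\in\{0,1\}^m}\prod_{k=1}^m p_k(j_k)\,U^i(s^1_{j_1},\dots,s^m_{j_m})$ with $p_k(1)=\gamma^k$, $p_k(0)=1-\gamma^k$. Write $\underline\gamma^{-i}=(\gamma^j)_{j\ne i}$ and $\lambda^i(\underline\gamma^{-i}):=V^i(\underline\gamma)|_{\gamma^i=1}-V^i(\underline\gamma)|_{\gamma^i=0}$. A Nash equilibrium is a point $\underline\gamma\in[0,1]^m$ such that for every $i$: $\lambda^i(\underline\gamma^{-i})=0$ if $0<\gamma^i<1$; $\lambda^i(\underline\gamma^{-i})\le 0$ if $\gamma^i=0$; $\lambda^i(\underline\gamma^{-i})\ge 0$ if $\gamma^i=1$. For $\underline\gamma$ put $L(\underline\gamma)=\{i:\gamma^i\in\{0,1\}\}$. A two-action game is a product two-action game if there exist $\underline v=(v_1,\dots,v_m)\in\{0,1\}^m$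 and numbers $a^i_j\in(0,1)$ for $i,j\in\mathcal A$, $i\ne j$, with $a^{i_1}_j\neq a^{i_2}_j$ whenever $i_1\neq i_2$ and both differ from $j$, such that $\lambda^i(\underline\gamma^{-i})=(-1)^{v_i}\prod_{j\in\mathcal A\setminus\{i\}}(\gamma^j-a^i_j)$ for every $i\in\mathcal A$. For $\pi\in S_m$, $F(\pi)=\{i\in\mathcal A:\pi(i)=i\}$ and $EC(\pi):=\{\underline\gamma\in[0,1]^m \mid L(\underline\gamma)=F(\pi),\ \gamma^j=a^{\pi(j)}_j \text{ for all } j\notin F(\pi)\}$. *)

(* Defs.v *)
From HB Require Import structures.
From mathcomp Require Import all_boot all_order all_algebra all_fingroup.
Set Implicit Arguments. Unset Strict Implicit. Unset Printing Implicit Defensive.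
Import Order.TTheory GRing.Theory Num.Theory.
Local Open Scope ring_scope.

(* Players are 'I_m. A pure strategy profile is s : {ffun 'I_m -> bool},
   s j = true meaning player j plays s^j_1, false meaning s^j_0. *)
Definition profile (m : nat) := {ffun 'I_m -> bool}.

Definition game (R : pzRingType) (m : nat) := 'I_m -> profile m -> R.

(* Mixed strategy combination: gamma j = probability that j plays s^j_1. *)
Definition mixed (R : pzRingType) (m : nat) := {ffun 'I_m -> R}.

Definition in_cube (R : realFieldType) m (g : mixed R m) :=
  forall i, 0 <= g i <= 1.

Definition V (R : comPzRingType) m (U : game R m) (i : 'I_m) (g : mixed R m) : R :=
  \sum_(s : profile m)
     (\prod_(k < m) (if s k then g k else 1 - g k)) * U i s.

Definition upd (R : pzRingType) m (g : mixed R m) (i : 'I_m) (x : R) : mixed R m :=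
  [ffun j => if j == i then x else g j].

Definition lambda (R : comPzRingType) m (U : game R m) (i : 'I_m) (g : mixed R m) : R :=
  V U i (upd g i 1) - V U i (upd g i 0).

Definition is_Nash (R : realFieldType) m (U : game R m) (g : mixed R m) : Prop :=
  in_cube g /\
  forall i,
    (0 < g i < 1 -> lambda U i g = 0) /\
    (g i = 0 -> lambda U i g <= 0) /\
    (g i = 1 -> lambda U i g >= 0).

Definition Lset (R : pzRingType) m (g : mixed R m) : {set 'I_m} :=
  [set i | (g i == 0) || (g i == 1)].

Definition Fix m (p : 'S_m) : {set 'I_m} := [set i | p i == i].

(* a i j stands for a^i_j (only meaningful for i != j). *)
Definition product_game (R : realFieldType) m (U : game R m)
    (v : 'I_m -> bool) (a : 'I_m -> 'I_m -> R) : Prop :=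
  (forall i j, i != j -> 0 < a i j < 1) /\
  (forall j i1 i2, i1 != j -> i2 != j -> i1 != i2 -> a i1 j != a i2 j) /\
  (forall i (g : mixed R m), in_cube g ->
     lambda U i g = (-1) ^+ v i * \prod_(j < m | j != i) (g j - a i j)).

Definition EC (R : realFieldType) m (a : 'I_m -> 'I_m -> R) (p : 'S_m)
    (g : mixed R m) : Prop :=
  in_cube g /\ Lset g = Fix p /\
  (forall j, j \notin Fix p -> g j = a (p j) j).

(* Main.v *)
Require Import Defs.
From HB Require Import structures.
From mathcomp Require Import all_boot all_order all_algebra all_fingroup.
Import Order.TTheory GRing.Theory Num.Theory.
Local Open Scope ring_scope.

Theorem theorem3p7 (R : realFieldType) (m : nat) (U : game R m)
    (v : 'I_m -> bool) (a : 'I_m -> 'I_m -> R) (p : 'S_m) :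
  product_game U v a ->
  #|Fix p| = 1%N ->
  exists g1 g2 : mixed R m,
    g1 <> g2 /\
    (forall g : mixed R m, EC a p g <-> (g = g1 \/ g = g2)) /\
    ((is_Nash U g1 /\ ~ is_Nash U g2) \/ (~ is_Nash U g1 /\ is_Nash U g2)).
Proof.
move=> [ha [hd hl]] /eqP /cards1P [f hF].
have inF j : (j \in Fix p) = (j == f) by rewrite hF in_set1.
have fixE j : (p j == j) = (j == f) by rewrite -inF inE.
have pf : p f = f by apply/eqP; rewrite fixE.
pose G := fun b : R => [ffun j => if j == f then b else a (p j) j] : mixed R m.
have Gv b j : G b j = if j == f then b else a (p j) j by rewrite ffunE.
have aij j : j != f -> 0 < a (p j) j < 1 by move=> h; apply: ha; rewrite fixE.
have cubeG b : 0 <= b <= 1 -> in_cube (G b).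
  move=> hb j; rewrite Gv; case: eqP => [//|/eqP jf].
  by have /andP[h0 h1] := aij j jf; rewrite !ltW.
pose c := (-1) ^+ v f * \prod_(j < m | j != f) (a (p j) j - a f j).
have lamf b : 0 <= b <= 1 -> lambda U f (G b) = c.
  move=> hb; rewrite hl; last exact: cubeG.
  by congr (_ * _); apply: eq_bigr => j hj; rewrite Gv (negbTE hj).
have cne : c != 0.
  rewrite mulf_eq0 negb_or signr_eq0 /=; apply/prodf_neq0 => j hj.
  rewrite subr_eq0; apply: hd; first by rewrite fixE.
    by rewrite eq_sym.
  apply/eqP => e; move: hj; rewrite -pf in e.
  by rewrite (perm_inj e) eqxx.
have lamj b j : 0 <= b <= 1 -> j != f -> lambda U j (G b) = 0.
  move=> hb hj; rewrite hl; last exact: cubeG.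
  set k := (p^-1)%g j.
  have pk : p k = j by rewrite permKV.
  have kj : k != j.
    apply: contra hj => /eqP e; rewrite -fixE.
    by rewrite -{1}e pk.
  have kf : k != f.
    by apply: contra hj => /eqP e; rewrite -pk e pf.
  by rewrite (bigD1 k kj) /= Gv (negbTE kf) pk subrr mul0r mulr0.
have ECG b : 0 <= b <= 1 -> (b == 0) || (b == 1) -> EC a p (G b).
  move=> hb hb01; split; first exact: cubeG.
  split.
    apply/setP => j; rewrite !inE fixE Gv; case: (eqVneq j f) => [_|jf]; first by rewrite hb01.
    by have /andP[h0 h1] := aij j jf; rewrite gt_eqF // lt_eqF.
  by move=> j; rewrite inF => jf; rewrite Gv (negbTE jf).
have nashG b : 0 <= b <= 1 -> (b == 0) || (b == 1) ->
    (b = 0 -> c <= 0) -> (b = 1 -> 0 <= c) -> is_Nash U (G b).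
  move=> hb hb01 h0 h1; split; first exact: cubeG.
  move=> i; case: (eqVneq i f) => [->|hif].
    rewrite Gv eqxx lamf //; split; last by split.
    move=> /andP[b0 b1]; move: hb01 => /orP[]/eqP e; rewrite e in b0 b1.
      by rewrite ltxx in b0.
    by rewrite ltxx in b1.
  by rewrite lamj.
have b0 : 0 <= (0 : R) <= 1 by apply/andP; split; rewrite ?lexx ?ler01.
have b1 : 0 <= (1 : R) <= 1 by apply/andP; split; rewrite ?lexx ?ler01.
have N1 : is_Nash U (G 1) -> 0 <= c.
  case=> _ /(_ f) [_ [_ h]]; by move: h; rewrite Gv eqxx lamf // => /(_ erefl).
have N0 : is_Nash U (G 0) -> c <= 0.
  case=> _ /(_ f) [_ [h _]]; by move: h; rewrite Gv eqxx lamf // => /(_ erefl).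
exists (G 0), (G 1); split.
  move/(congr1 (fun g : mixed R m => g f)); rewrite /= !Gv eqxx => /esym/eqP.
  by rewrite oner_eq0.
split.
  move=> g; split.
    case=> cub [hL hj].
    have : f \in Lset g by rewrite hL inF.
    rewrite inE => /orP [] /eqP e; [left|right]; apply/ffunP => j;
      rewrite Gv; case: eqP => [->//|/eqP jf]; by apply: hj; rewrite inF.
  by case=> ->; apply: ECG; rewrite ?eqxx ?orbT.
case: (ltgtP c 0) => hc.
- left; split.
    apply: nashG; rewrite ?eqxx ?orbT //; first by move=> _; rewrite ltW.
    by move=> e; have := oner_neq0 R; rewrite e eqxx.
  by move/N1; rewrite leNgt hc.
- right; split.
    by move/N0; rewrite leNgt hc.
  apply: nashG; rewrite ?eqxx ?orbT //; last by move=> _; rewrite ltW.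
  by move=> e; have := oner_neq0 R; rewrite e eqxx.
- by move: cne; rewrite hc eqxx.
Qed.
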